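(* Let $(A_{i,r})$ be a double complex in an abelian category $\mathcal{A}$ all of whose rows and columns are exact and which is weakly bounded (e.g. $A_{i,r}=0$ whenever $i<0$ or $r<0$), and let $\Sigma:\mathcal{A}^{\mathbb{Z}}\to\mathcal{B}$ be any exact functor to an abelian category $\mathcal{B}$ with a functorial isomorphism $\Sigma_i X_i\cong\Sigma_i X_{i+1}$. Then all total homology objects $H^{\mathrm{tot}}(A_n)$ of the total complex with respect to $\Sigma$ are zero.
   Context: A double complex in $\mathcal{A}$ is a family of objects $A_{i,r}$ $(i,r\in\mathbb{Z})$ ($i$ = row index, increasing downward; $r$ = column index, increasing rightward) with vertical maps $\delta_1:A_{i,r}\to A_{i+1,r}$ and horizontal maps $\delta_2:A_{i,r}\to A_{i,r+1}$ such that $\delta_1\delta_1=0$, $\delta_2\delta_2=0$, $\delta_1\delta_2=\delta_2\delta_1$; a row/column is exact if its homology vanishes everywhere. For an object $A$ of it, with $d,e$ the horizontal maps into/out of $A$, $c,f$ the vertical maps into/out of $A$, $p$ the composite of two arrows ending at $A$ and $q$ the composite of two arrows starting at $A$, the receptor is ${}^\square A=(\ker e\cap\ker f)/\operatorname{im}p$ and the donor is $A_\square=\ker q/(\operatorname{im}c+\operatorname{im}d)$. The double complex is weakly bounded if for every $r,s$ there is a positive integer $n$ such that ${}^\square A_{r-n,s+n}=0$ or $(A_{r-n-1,s+n})_\square=0$, and also a negative integer $n$ with the same property. $\mathcal{A}^{\mathbb{Z}}$ is the category of $\mathbb{Z}$-indexed families of objects of $\mathcal{A}$. The total complex has $A_n=\Sigma_i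 A_{i,n-i}$, with differential $\delta=\delta_2+(-1)^n\delta_1:A_n\to A_{n+1}$, where $\delta_1,\delta_2:A_n\to A_{n+1}$ are induced by the vertical and horizontal maps (using the shift isomorphism for $\delta_1$); $H^{\mathrm{tot}}(A_n)=\ker(\delta:A_n\to A_{n+1})/\operatorname{im}(\delta:A_{n-1}\to A_n)$. *)

(* Defs.v *)
From HB Require Import structures.
From mathcomp Require Import all_boot all_order all_algebra.
Set Implicit Arguments. Unset Strict Implicit. Unset Printing Implicit Defensive.
Import GRing.Theory.
Local Open Scope ring_scope.

Record AbCat := {
  Obj : Type;
  Hom : Obj -> Obj -> zmodType;
  comp : forall a b c, Hom b c -> Hom a b -> Hom a c;   (* comp g f = g o f *)
  idm : forall a, Hom a a;
  compA : forall a b c d (h : Hom c d) (g : Hom b c) (f : Hom a b),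
      comp h (comp g f) = comp (comp h g) f;
  comp1m : forall a b (f : Hom a b), comp (idm b) f = f;
  compm1 : forall a b (f : Hom a b), comp f (idm a) = f;
  compDl : forall a b c (g g' : Hom b c) (f : Hom a b),
      comp (g + g') f = comp g f + comp g' f;
  compDr : forall a b c (g : Hom b c) (f f' : Hom a b),
      comp g (f + f') = comp g f + comp g f';
  zeroO : Obj;
  zeroO_init : forall b (f : Hom zeroO b), f = 0;
  zeroO_term : forall b (f : Hom b zeroO), f = 0;
  bpO : Obj -> Obj -> Obj;
  bp_inl : forall a b, Hom a (bpO a b);
  bp_inr : forall a b, Hom b (bpO a b);
  bp_pl : forall a b, Hom (bpO a b) a;
  bp_pr : forall a b, Hom (bpO a b) b;
  bp_pl_inl : forall a b, comp (bp_pl a b) (bp_inl a b) = idm a;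
  bp_pr_inr : forall a b, comp (bp_pr a b) (bp_inr a b) = idm b;
  bp_pl_inr : forall a b, comp (bp_pl a b) (bp_inr a b) = 0;
  bp_pr_inl : forall a b, comp (bp_pr a b) (bp_inl a b) = 0;
  bp_sum : forall a b, comp (bp_inl a b) (bp_pl a b)
                     + comp (bp_inr a b) (bp_pr a b) = idm (bpO a b);
  kerO : forall a b, Hom a b -> Obj;
  kerM : forall a b (f : Hom a b), Hom (kerO f) a;
  kerLift : forall a b (f : Hom a b) t, Hom t a -> Hom t (kerO f);
  kerM_comp : forall a b (f : Hom a b), comp f (kerM f) = 0;
  kerLift_spec : forall a b (f : Hom a b) t (x : Hom t a),
      comp f x = 0 -> comp (kerM f) (kerLift f x) = x;
  kerM_mono : forall a b (f : Hom a b) t (y y' : Hom t (kerO f)),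
      comp (kerM f) y = comp (kerM f) y' -> y = y';
  cokO : forall a b, Hom a b -> Obj;
  cokM : forall a b (f : Hom a b), Hom b (cokO f);
  cokDesc : forall a b (f : Hom a b) t, Hom b t -> Hom (cokO f) t;
  cokM_comp : forall a b (f : Hom a b), comp (cokM f) f = 0;
  cokDesc_spec : forall a b (f : Hom a b) t (x : Hom b t),
      comp x f = 0 -> comp (cokDesc f x) (cokM f) = x;
  cokM_epi : forall a b (f : Hom a b) t (y y' : Hom (cokO f) t),
      comp y (cokM f) = comp y' (cokM f) -> y = y';
  mono_is_kernel : forall a b (m : Hom a b),
      (forall t (x y : Hom t a), comp m x = comp m y -> x = y) ->
      forall t (x : Hom t b), comp (cokM m) x = 0 ->
      exists y : Hom t a, comp m y = x;
  epi_is_cokernel : forall a b (e : Hom a b),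
      (forall t (x y : Hom b t), comp x e = comp y e -> x = y) ->
      forall t (x : Hom a t), comp x (kerM e) = 0 ->
      exists y : Hom b t, comp y e = x
}.
(* (uniqueness of the factorisations in the last two axioms follows from
    mono/epi-ness, so only existence is required) *)

Arguments Hom : clear implicits.
Arguments comp {_ _ _ _}.
Arguments idm {_}.
Arguments kerO {_ _ _}.
Arguments kerM {_ _ _}.
Arguments kerLift {_ _ _} _ {_}.
Arguments cokO {_ _ _}.
Arguments cokM {_ _ _}.
Arguments bpO {_}.
Arguments bp_inl {_ _ _}.
Arguments bp_inr {_ _ _}.
Arguments bp_pl {_ _ _}.
Arguments bp_pr {_ _ _}.
Arguments zeroO {_}.

Section AbCatDefs.
Variable C : AbCat.

Definition isZeroObj (X : Obj C) : Prop :=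
  (forall Y (f : Hom C X Y), f = 0) /\ (forall Y (f : Hom C Y X), f = 0).

(* exactness of  a --f--> b --g--> c  at b : gf = 0 and im f = ker g *)
Definition exactAt (a b c : Obj C) (f : Hom C a b) (g : Hom C b c) : Prop :=
  comp g f = 0 /\ comp (cokM f) (kerM g) = 0.

Definition pairM (a b c : Obj C) (e : Hom C a b) (f : Hom C a c)
  : Hom C a (bpO b c) := comp bp_inl e + comp bp_inr f.
Definition copairM (x y a : Obj C) (c : Hom C x a) (d : Hom C y a)
  : Hom C (bpO x y) a := comp c bp_pl + comp d bp_pr.

Definition castF (F : int -> Obj C) (m n : int) (e : m = n) : Hom C (F m) (F n) :=
  match e in _ = k return Hom C (F m) (F k) with erefl => idm (F m) end.
End AbCatDefs.

Arguments isZeroObj {C}.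
Arguments exactAt {C a b c}.
Arguments pairM {C a b c}.
Arguments copairM {C x y a}.
Arguments castF {C} F {m n} e.

(* objects of A^Z : Z-indexed families; morphisms : families of maps.
   Kernels/cokernels in A^Z are computed pointwise, so a sequence in
   A^Z is exact iff it is exact at every index. *)
Definition famHom (A : AbCat) (X Y : int -> Obj A) := forall i, Hom A (X i) (Y i).
Definition shiftF (A : AbCat) (X : int -> Obj A) : int -> Obj A := fun i => X (i + 1).
Definition shiftM (A : AbCat) (X Y : int -> Obj A) (f : famHom X Y)
  : famHom (shiftF X) (shiftF Y) := fun i => f (i + 1).

Record ExactSumFunctor (A B : AbCat) := {
  SO : (int -> Obj A) -> Obj B;
  SM : forall X Y : int -> Obj A, famHom X Y -> Hom B (SO X) (SO Y);
  SM_id : forall X, SM (fun i => idm (X i)) = idm (SO X);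
  SM_comp : forall X Y Z (g : famHom Y Z) (f : famHom X Y),
      SM (fun i => comp (g i) (f i)) = comp (SM g) (SM f);
  SM_add : forall X Y (f g : famHom X Y), SM (fun i => f i + g i) = SM f + SM g;
  SM_exact : forall X Y Z (f : famHom X Y) (g : famHom Y Z),
      (forall i, exactAt (f i) (g i)) -> exactAt (SM f) (SM g);
  theta : forall X, Hom B (SO X) (SO (shiftF X));
  thetaInv : forall X, Hom B (SO (shiftF X)) (SO X);
  theta_inv_l : forall X, comp (thetaInv X) (theta X) = idm (SO X);
  theta_inv_r : forall X, comp (theta X) (thetaInv X) = idm (SO (shiftF X));
  theta_nat : forall X Y (f : famHom X Y),
      comp (SM (shiftM f)) (theta X) = comp (theta Y) (SM f)
}.
Arguments SO {A B}.
Arguments SM {A B} _ {X Y}.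
Arguments theta {A B} _ X.
Arguments thetaInv {A B} _ X.

(* Double complexes: A i r, i = row (downwards), r = column (rightwards) *)
Record DoubleComplex (A : AbCat) := {
  DC : int -> int -> Obj A;
  d1 : forall i r, Hom A (DC i r) (DC (i + 1) r);
  d2 : forall i r, Hom A (DC i r) (DC i (r + 1));
  d1d1 : forall i r, comp (d1 (i + 1) r) (d1 i r) = 0;
  d2d2 : forall i r, comp (d2 i (r + 1)) (d2 i r) = 0;
  d1d2 : forall i r, comp (d1 i (r + 1)) (d2 i r) = comp (d2 (i + 1) r) (d1 i r)
}.
Arguments DC {A}.
Arguments d1 {A}.
Arguments d2 {A}.

Section DoubleComplexDefs.
Variables (A : AbCat) (D : DoubleComplex A).

Definition rowsExact : Prop :=
  forall i r, exactAt (d2 D i r) (d2 D i (r + 1)).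
Definition colsExact : Prop :=
  forall i r, exactAt (d1 D i r) (d1 D (i + 1) r).

Lemma sub1K (r : int) : r - 1 + 1 = r.
Proof. by rewrite subrK. Qed.

Definition dIn (i r : int) : Hom A (DC D i (r - 1)) (DC D i r) :=
  comp (castF (DC D i) (sub1K r)) (d2 D i (r - 1)).
Definition cIn (i r : int) : Hom A (DC D (i - 1) r) (DC D i r) :=
  comp (castF (fun k => DC D k r) (sub1K i)) (d1 D (i - 1) r).
(* e = d2 D i r, f = d1 D i r *)
Definition pIn (i r : int) : Hom A (DC D (i - 1) (r - 1)) (DC D i r) :=
  comp (cIn i r) (dIn (i - 1) r).
Definition qOut (i r : int) : Hom A (DC D i r) (DC D (i + 1) (r + 1)) :=
  comp (d2 D (i + 1) r) (d1 D i r).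

(* receptor  (ker e /\ ker f) / im p  =  coker (p lifted into ker (e,f)) *)
Definition receptor (i r : int) : Obj A :=
  cokO (kerLift (pairM (d2 D i r) (d1 D i r)) (pIn i r)).
(* donor  ker q / (im c + im d)  =  coker ([c d] lifted into ker q) *)
Definition donor (i r : int) : Obj A :=
  cokO (kerLift (qOut i r) (copairM (cIn i r) (dIn i r))).

Definition weaklyBounded : Prop :=
  forall r s : int,
    (exists n : int, 0 < n /\
       (isZeroObj (receptor (r - n) (s + n)) \/ isZeroObj (donor (r - n - 1) (s + n))))
 /\ (exists n : int, n < 0 /\
       (isZeroObj (receptor (r - n) (s + n)) \/ isZeroObj (donor (r - n - 1) (s + n)))).

Variables (B : AbCat) (S : ExactSumFunctor A B).

Definition totFam (n : int) : int -> Obj A := fun i => DC D i (n - i).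
Definition totO (n : int) : Obj B := SO S (totFam n).

Lemma tot_idx2 (n i : int) : n - i + 1 = n + 1 - i.
Proof. by rewrite addrAC. Qed.
Lemma tot_idx1 (n i : int) : n - i = n + 1 - (i + 1).
Proof. by rewrite opprD addrACA subrr addr0. Qed.

Definition totD2 (n : int) : Hom B (totO n) (totO (n + 1)) :=
  SM S (X := totFam n) (Y := totFam (n + 1))
     (fun i => comp (castF (DC D i) (tot_idx2 n i)) (d2 D i (n - i))).
(* vertical part: A_{i,n-i} -> A_{i+1,n+1-(i+1)}, a map into the shifted
   family, followed by the inverse shift isomorphism *)
Definition totD1 (n : int) : Hom B (totO n) (totO (n + 1)) :=
  comp (thetaInv S (totFam (n + 1)))
    (SM S (X := totFam n) (Y := shiftF (totFam (n + 1)))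
       (fun i => comp (castF (DC D (i + 1)) (tot_idx1 n i)) (d1 D i (n - i)))).
Definition totD (n : int) : Hom B (totO n) (totO (n + 1)) :=
  totD2 n + (if odd (absz n) then - totD1 n else totD1 n).

(* H^tot(A_n) = ker delta_n / im delta_{n-1}
              = coker (delta_{n-1} lifted into ker delta_n) *)
Definition Htot (n : int) : Obj B :=
  cokO (kerLift (totD n) (comp (castF totO (sub1K n)) (totD (n - 1)))).

End DoubleComplexDefs.

(* Main.v *)
Require Import Defs.
From mathcomp Require Import all_boot all_order all_algebra.
From mathcomp Require Import zify.
From Stdlib Require Import FunctionalExtensionality.
Set Implicit Arguments. Unset Strict Implicit. Unset Printing Implicit Defensive.
Import GRing.Theory.
Import Defs.
Local Open Scope ring_scope.

Notation cmp := Defs.comp.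
Notation HH := Defs.Hom.

Section Tool.
Variable C : AbCat.
Implicit Types a b c t : Obj C.

Lemma comp0m a b c (f : HH C a b) : cmp (0 : HH C b c) f = 0.
Proof. by apply: (addrI (cmp (0 : HH C b c) f)); rewrite -compDl !addr0. Qed.
Lemma compm0 a b c (g : HH C b c) : cmp g (0 : HH C a b) = 0.
Proof. by apply: (addrI (cmp g (0 : HH C a b))); rewrite -compDr !addr0. Qed.
Lemma compNm a b c (g : HH C b c) (f : HH C a b) : cmp (- g) f = - cmp g f.
Proof. by apply: (addrI (cmp g f)); rewrite -compDl !subrr comp0m. Qed.
Lemma compmN a b c (g : HH C b c) (f : HH C a b) : cmp g (- f) = - cmp g f.
Proof. by apply: (addrI (cmp g f)); rewrite -compDr !subrr compm0. Qed.
Lemma compBl a b c (g g' : HH C b c) (f : HH C a b) : cmp (g - g') f = cmp g f - cmp g' f.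
Proof. by rewrite compDl compNm. Qed.
Lemma compBr a b c (g : HH C b c) (f f' : HH C a b) : cmp g (f - f') = cmp g f - cmp g f'.
Proof. by rewrite compDr compmN. Qed.

Definition epi a b (e : HH C a b) := forall t (x y : HH C b t), cmp x e = cmp y e -> x = y.
Definition mono a b (m : HH C a b) := forall t (x y : HH C t a), cmp m x = cmp m y -> x = y.

Lemma epiP a b (e : HH C a b) : (forall t (x : HH C b t), cmp x e = 0 -> x = 0) -> epi e.
Proof. move=> H t x y E; apply/eqP; rewrite -subr_eq0; apply/eqP/H; by rewrite compBl E subrr. Qed.
Lemma monoP a b (e : HH C a b) : (forall t (x : HH C t a), cmp e x = 0 -> x = 0) -> mono e.
Proof. move=> H t x y E; apply/eqP; rewrite -subr_eq0; apply/eqP/H; by rewrite compBr E subrr. Qed.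
Lemma epi0 a b (e : HH C a b) t (x : HH C b t) : epi e -> cmp x e = 0 -> x = 0.
Proof. by move=> He E; apply: He; rewrite E comp0m. Qed.
Lemma mono0 a b (e : HH C a b) t (x : HH C t a) : mono e -> cmp e x = 0 -> x = 0.
Proof. by move=> He E; apply: He; rewrite E compm0. Qed.

Lemma epi_id a : epi (idm a).
Proof. by move=> t x y; rewrite !compm1. Qed.
Lemma epi_comp a b c (f : HH C b c) (g : HH C a b) : epi f -> epi g -> epi (cmp f g).
Proof. by move=> Hf Hg t x y; rewrite !compA => /Hg /Hf. Qed.
Lemma mono_comp a b c (f : HH C b c) (g : HH C a b) : mono f -> mono g -> mono (cmp f g).
Proof. by move=> Hf Hg t x y; rewrite -!compA => /Hf /Hg. Qed.
Lemma mono_ker a b (f : HH C a b) : mono (kerM f).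
Proof. by move=> t x y; apply: kerM_mono. Qed.
Lemma epi_cok a b (f : HH C a b) : epi (cokM f).
Proof. by move=> t x y; apply: cokM_epi. Qed.
Lemma castFepi (F : int -> Obj C) m n (e : m = n) : epi (castF F e).
Proof. case: n / e; exact: epi_id. Qed.
Lemma castFmono (F : int -> Obj C) m n (e : m = n) : mono (castF F e).
Proof. by case: n / e => t x y; rewrite !comp1m. Qed.

Definition imM a b (f : HH C a b) := kerM (cokM f).
Definition coimM a b (f : HH C a b) := kerLift (cokM f) f.
Lemma imM_fact a b (f : HH C a b) : cmp (imM f) (coimM f) = f.
Proof. by rewrite /imM /coimM kerLift_spec // cokM_comp. Qed.
Lemma coimM_epi a b (f : HH C a b) : epi (coimM f).
Proof.
apply: epiP => w u Hu.
set m := imM f; set k := kerM u.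
have mkmono : mono (cmp m k) by apply: mono_comp; apply: mono_ker.
have Hf : f = cmp (cmp m k) (kerLift u (coimM f)).
  by rewrite -compA kerLift_spec // imM_fact.
have H1 : cmp (cokM (cmp m k)) f = 0.
    by have := congr1 (cmp (cokM (cmp m k))) Hf; rewrite compA cokM_comp comp0m.
have H2 : cmp (cokM (cmp m k)) m = 0.
  by rewrite -(cokDesc_spec H1) -compA kerM_comp compm0.
have [y Hy] := mono_is_kernel mkmono H2.
have Hky : cmp k y = idm _.
  by apply: (kerM_mono (f := cokM f)); rewrite compA Hy compm1.
by rewrite -(compm1 u) -Hky compA kerM_comp comp0m.
Qed.

Definition inIm a b t (f : HH C a b) (x : HH C t b) :=
  exists t' (e : HH C t' t) (y : HH C t' a), epi e /\ cmp f y = cmp x e.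

Lemma pl_copair x y a (c : HH C x a) (d : HH C y a) :
  cmp (copairM c d) bp_inl = c /\ cmp (copairM c d) bp_inr = d.
Proof.
rewrite /copairM !compDl -!compA bp_pl_inl bp_pr_inl bp_pl_inr bp_pr_inr.
by rewrite !compm0 !compm1 addr0 add0r.
Qed.
Lemma pair_pl a b c (e : HH C a b) (f : HH C a c) :
  cmp bp_pl (pairM e f) = e /\ cmp bp_pr (pairM e f) = f.
Proof.
rewrite /pairM !compDr !compA bp_pl_inl bp_pr_inl bp_pl_inr bp_pr_inr.
by rewrite !comp0m !comp1m addr0 add0r.
Qed.
Lemma copair_pair x y a t (c : HH C x a) (d : HH C y a) (u : HH C t x) (v : HH C t y) :
  cmp (copairM c d) (pairM u v) = cmp c u + cmp d v.
Proof. by rewrite /copairM compDl -!compA (pair_pl u v).1 (pair_pl u v).2. Qed.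

Lemma copair_comp x y a t (c : HH C x a) (d : HH C y a) (z : HH C t (bpO x y)) :
  cmp (copairM c d) z = cmp c (cmp bp_pl z) + cmp d (cmp bp_pr z).
Proof. by rewrite /copairM compDl -!Defs.compA. Qed.

Lemma inIm_cok a b t (f : HH C a b) (x : HH C t b) : cmp (cokM f) x = 0 -> inIm f x.
Proof.
move=> Hx.
set m := imM f; set e0 := coimM f.
set x' := kerLift (cokM f) x.
have Hx' : cmp m x' = x by rewrite /m /imM kerLift_spec.
set phi := copairM e0 (- x').
exists (kerO phi), (cmp bp_pr (kerM phi)), (cmp bp_pl (kerM phi)); split.
  apply: epiP => w u Hu.
  have Hphi : epi phi.
    apply: epiP => w' z Hz.
    apply: (epi0 (@coimM_epi _ _ f)).
    by rewrite -/e0 -(pl_copair e0 (- x')).1 compA Hz comp0m.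
  have Hu' : cmp (cmp u bp_pr) (kerM phi) = 0 by rewrite -compA.
  have [z Hz] := epi_is_cokernel Hphi Hu'.
  have z0 : z = 0.
    apply: (epi0 (@coimM_epi _ _ f)).
    by rewrite -/e0 -(pl_copair e0 (- x')).1 compA Hz -compA bp_pr_inl compm0.
  by rewrite -(compm1 u) -(bp_pr_inr a t) Defs.compA -Hz z0 !comp0m.
have H0 : cmp e0 (cmp bp_pl (kerM phi)) = cmp x' (cmp bp_pr (kerM phi)).
  have := copair_comp e0 (- x') (kerM phi).
  rewrite -/phi kerM_comp compNm => /eqP; rewrite eq_sym subr_eq0 => /eqP.
  done.
have E := congr1 (fun h => cmp h (cmp bp_pl (kerM phi))) (imM_fact f).
by rewrite /= in E; rewrite -E -Defs.compA -/e0 H0 Defs.compA Hx'.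
Qed.

Lemma exact_elem a b c (f : HH C a b) (g : HH C b c) :
  exactAt f g <-> cmp g f = 0 /\ (forall t (x : HH C t b), cmp g x = 0 -> inIm f x).
Proof.
split=> [[gf0 H] | [gf0 H]]; split=> //.
  move=> t x gx; apply: inIm_cok.
  by rewrite -(kerLift_spec gx) compA H comp0m.
have [t' [e [y [He Hy]]]] := H _ (kerM g) (kerM_comp g).
apply: (epi0 He); by rewrite -compA -Hy compA cokM_comp comp0m.
Qed.

Lemma zero_cok a b (h : HH C a b) : cokM h = 0 -> isZeroObj (cokO h).
Proof.
move=> H0.
have Hid : idm (cokO h) = 0 by apply: (epi0 (@epi_cok _ _ h)); rewrite comp1m.
split=> Y f.
  by apply: (epi0 (@epi_cok _ _ h)); rewrite H0 compm0.
by rewrite -(comp1m f) Hid comp0m.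
Qed.

Lemma ker_cok_zero a b c (f : HH C a b) (g : HH C b c) :
  cmp g f = 0 -> exactAt f g -> isZeroObj (cokO (kerLift g f)).
Proof.
move=> gf0 /exact_elem [_ H]; apply: zero_cok.
have [t' [e [y [He Hy]]]] := H _ (kerM g) (kerM_comp g).
have E : cmp (kerLift g f) y = e.
  by apply: (kerM_mono (f := g)); rewrite compA kerLift_spec // Hy compm1.
by apply: (epi0 He); rewrite -E compA cokM_comp comp0m.
Qed.

Lemma ker_cok_zero_inv a b c (f : HH C a b) (g : HH C b c) :
  cmp g f = 0 -> isZeroObj (cokO (kerLift g f)) -> exactAt f g.
Proof.
move=> gf0 [_ Z]; apply/exact_elem; split=> // t x gx.
have /inIm_cok [t' [e [y [He Hy]]]] : cmp (cokM (kerLift g f)) (kerLift g x) = 0.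
  by rewrite (Z _ (cokM _)) comp0m.
exists t', e, y; split=> //.
have E : cmp (cmp (kerM g) (kerLift g f)) y = cmp f y by rewrite kerLift_spec.
by rewrite -E -Defs.compA Hy Defs.compA kerLift_spec.
Qed.

End Tool.

Section Tool2.
Variable C : AbCat.
Implicit Types a b c t : Obj C.

Lemma pairM_comp a b c t (e : HH C a b) (f : HH C a c) (x : HH C t a) :
  cmp (pairM e f) x = pairM (cmp e x) (cmp f x).
Proof. by rewrite /pairM compDl -!Defs.compA. Qed.

Lemma pairM_zero a b c t (e : HH C a b) (f : HH C a c) (x : HH C t a) :
  cmp (pairM e f) x = 0 <-> cmp e x = 0 /\ cmp f x = 0.
Proof.
rewrite pairM_comp; split.
  move=> H; split.
    by rewrite -(pair_pl (cmp e x) (cmp f x)).1 H compm0.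
  by rewrite -(pair_pl (cmp e x) (cmp f x)).2 H compm0.
by case=> -> ->; rewrite /pairM !compm0 addr0.
Qed.

Lemma exact_pairM a b c d (p : HH C d a) (e : HH C a b) (f : HH C a c) :
  exactAt p (pairM e f) <-> cmp e p = 0 /\ cmp f p = 0 /\
     (forall t (x : HH C t a), cmp e x = 0 -> cmp f x = 0 -> inIm p x).
Proof.
split.
  move/exact_elem=> [H0 H]; have /pairM_zero [H1 H2] := H0.
  do 2!split=> //.
  by move=> t x h1 h2; apply: H; apply/pairM_zero.
case=> [H1 [H2 H]]; apply/exact_elem; split; first by apply/pairM_zero.
move=> t x /pairM_zero [h1 h2]; exact: H.
Qed.

End Tool2.

Section Links.
Variables (A : AbCat) (D : DoubleComplex A).
Hypotheses (rowsE : rowsExact D) (colsE : colsExact D).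

Definition Rz (i c : int) := forall t (x : HH A t (DC D (i+1) (c+1))),
  cmp (d2 D (i+1) (c+1)) x = 0 -> cmp (d1 D (i+1) (c+1)) x = 0 ->
  inIm (cmp (d1 D i (c+1)) (d2 D i c)) x.
Definition Dz (i c : int) := forall t (a : HH A t (DC D (i+1) (c+1))),
  cmp (cmp (d2 D (i+1+1) (c+1)) (d1 D (i+1) (c+1))) a = 0 ->
  inIm (copairM (d1 D i (c+1)) (d2 D (i+1) c)) a.

Lemma link_v i c : Dz i c <-> Rz (i+1) c.
Proof.
split.
- move=> HD t x h2 h1.
  have [_ HC] := (exact_elem _ _).1 (colsE (i+1) (c+1)).
  have [t1 [e1 [a [He1 Ha]]]] := HC _ _ h1.
  have : cmp (cmp (d2 D (i+1+1) (c+1)) (d1 D (i+1) (c+1))) a = 0.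
    by rewrite -Defs.compA Ha Defs.compA h2 comp0m.
  move/HD => [t2 [e2 [y [He2 Hy]]]].
  exists t2, (cmp e1 e2), (cmp bp_pr y); split; first exact: epi_comp.
  rewrite [RHS]Defs.compA -Ha -[RHS]Defs.compA -Hy copair_comp compDr.
  by rewrite [in X in _ = X + _]Defs.compA d1d1 comp0m add0r !Defs.compA.
- move=> HR t a Hq.
  have h2 : cmp (d2 D (i+1+1) (c+1)) (cmp (d1 D (i+1) (c+1)) a) = 0 by rewrite Defs.compA.
  have h1 : cmp (d1 D (i+1+1) (c+1)) (cmp (d1 D (i+1) (c+1)) a) = 0.
    by rewrite Defs.compA d1d1 comp0m.
  have [t1 [e1 [y [He1 Hy]]]] := HR _ _ h2 h1.
  have h3 : cmp (d1 D (i+1) (c+1)) (cmp a e1 - cmp (d2 D (i+1) c) y) = 0.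
    by rewrite compBr !Defs.compA Hy subrr.
  have [_ HC] := (exact_elem _ _).1 (colsE i (c+1)).
  have [t2 [e2 [z [He2 Hz]]]] := HC _ _ h3.
  exists t2, (cmp e1 e2), (pairM z (cmp y e2)); split; first exact: epi_comp.
  rewrite copair_pair Hz compBl !Defs.compA subrK.
  by [].
Qed.

Lemma link_h i c : Dz i c <-> Rz i (c+1).
Proof.
split.
- move=> HD t x h2 h1.
  have [_ HR] := (exact_elem _ _).1 (rowsE (i+1) (c+1)).
  have [t1 [e1 [a [He1 Ha]]]] := HR _ _ h2.
  have : cmp (cmp (d2 D (i+1+1) (c+1)) (d1 D (i+1) (c+1))) a = 0.
    by rewrite -d1d2 -Defs.compA Ha Defs.compA h1 comp0m.
  move/HD => [t2 [e2 [y [He2 Hy]]]].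
  exists t2, (cmp e1 e2), (cmp bp_pl y); split; first exact: epi_comp.
  rewrite [RHS]Defs.compA -Ha -[RHS]Defs.compA -Hy copair_comp compDr.
  by rewrite [in X in _ = _ + X]Defs.compA d2d2 comp0m addr0 !Defs.compA d1d2.
- move=> HR t a Hq.
  have h2 : cmp (d2 D (i+1) (c+1+1)) (cmp (d2 D (i+1) (c+1)) a) = 0.
    by rewrite Defs.compA d2d2 comp0m.
  have h1 : cmp (d1 D (i+1) (c+1+1)) (cmp (d2 D (i+1) (c+1)) a) = 0.
    by rewrite Defs.compA d1d2.
  have [t1 [e1 [y [He1 Hy]]]] := HR _ _ h2 h1.
  have h3 : cmp (d2 D (i+1) (c+1)) (cmp a e1 - cmp (d1 D i (c+1)) y) = 0.
    by rewrite compBr !Defs.compA -Hy d1d2 subrr.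
  have [_ HC] := (exact_elem _ _).1 (rowsE (i+1) c).
  have [t2 [e2 [z [He2 Hz]]]] := HC _ _ h3.
  exists t2, (cmp e1 e2), (pairM (cmp y e2) z); split; first exact: epi_comp.
  by rewrite copair_pair Hz compBl !Defs.compA [LHS]addrCA subrr addr0.
Qed.

End Links.

Section Zero.
Variables (A : AbCat) (D : DoubleComplex A).
Hypotheses (rowsE : rowsExact D) (colsE : colsExact D).

Lemma castF_refl (F : int -> Obj A) m (e : m = m) : castF F e = idm (F m).
Proof. by rewrite (eq_irrelevance e erefl). Qed.

Lemma rec_gen j k j' k' (e : j' + 1 = j + 1) (e' : k' + 1 = k + 1) :
  isZeroObj (cokO (kerLift (pairM (d2 D (j+1) (k+1)) (d1 D (j+1) (k+1)))
     (cmp (cmp (castF (fun x => DC D x (k+1)) e) (d1 D j' (k+1)))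
          (cmp (castF (DC D j') e') (d2 D j' k'))))) -> Rz D j k.
Proof.
have ej : j' = j by apply: (addIr 1).
have ek : k' = k by apply: (addIr 1).
subst j' k'; rewrite !castF_refl !comp1m => Z.
have H0 : cmp (pairM (d2 D (j+1) (k+1)) (d1 D (j+1) (k+1))) (cmp (d1 D j (k+1)) (d2 D j k)) = 0.
  apply/pairM_zero; split.
    by rewrite Defs.compA -d1d2 -Defs.compA d2d2 compm0.
  by rewrite Defs.compA d1d1 comp0m.
have /exact_pairM [_ [_ H]] := ker_cok_zero_inv H0 Z.
move=> t x h2 h1; exact: H.
Qed.

Lemma receptor_Rz j k : isZeroObj (receptor D (j+1) (k+1)) -> Rz D j k.
Proof. exact: rec_gen. Qed.

Lemma don_gen j k j' k' (e : j' + 1 = j + 1) (e' : k' + 1 = k + 1) :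
  isZeroObj (cokO (kerLift (cmp (d2 D (j+1+1) (k+1)) (d1 D (j+1) (k+1)))
     (copairM (cmp (castF (fun x => DC D x (k+1)) e) (d1 D j' (k+1)))
              (cmp (castF (DC D (j+1)) e') (d2 D (j+1) k'))))) -> Dz D j k.
Proof.
have ej : j' = j by apply: (addIr 1).
have ek : k' = k by apply: (addIr 1).
subst j' k'; rewrite !castF_refl !comp1m => Z.
have H0 : cmp (cmp (d2 D (j+1+1) (k+1)) (d1 D (j+1) (k+1)))
            (copairM (d1 D j (k+1)) (d2 D (j+1) k)) = 0.
  rewrite /copairM compDr !Defs.compA.
  rewrite -(Defs.compA (d2 D (j+1+1) (k+1))) d1d1 compm0 comp0m add0r.
  by rewrite -(Defs.compA (d2 D (j+1+1) (k+1))) d1d2 Defs.compA d2d2 !comp0m.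
have /exact_elem [_ H] := ker_cok_zero_inv H0 Z.
move=> t x hq; exact: H.
Qed.

Lemma donor_Dz j k : isZeroObj (donor D (j+1) (k+1)) -> Dz D j k.
Proof. exact: don_gen. Qed.

End Zero.


Section Chain.
Variables (A : AbCat) (D : DoubleComplex A).
Hypotheses (rowsE : rowsExact D) (colsE : colsExact D) (wb : weaklyBounded D).

Lemma Rz_step a i : Rz D (i+1) (a - (i+1)) <-> Rz D i (a - i).
Proof.
rewrite -(link_v colsE) (link_h rowsE).
by have -> : a - (i + 1) + 1 = a - i by lia.
Qed.

Lemma Rz_nat a i (n : nat) : Rz D (i + n%:Z) (a - (i + n%:Z)) <-> Rz D i (a - i).
Proof.
elim: n => [|m IHm]; first by have -> : i + 0%:Z = i by lia.
rewrite -IHm.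
have -> : i + m.+1%:Z = i + m%:Z + 1 by lia.
exact: Rz_step.
Qed.

Lemma Rz_const a i j : Rz D i (a - i) <-> Rz D j (a - j).
Proof.
have H : forall x : int, Rz D x (a - x) <-> Rz D 0 (a - 0).
  move=> x; case: x => n.
    have := Rz_nat a 0 n.
    by have -> : 0 + n%:Z = Posz n by lia.
  have := Rz_nat a (Negz n) n.+1.
  have -> : Negz n + n.+1%:Z = 0 by lia.
  move=> H; exact: iff_sym H.
split=> [/H|] Hx; first exact/(H j).
exact/H/(H j).
Qed.

Lemma all_Rz i c : Rz D i c.
Proof.
have [[n [n0 Hn]] _] := wb (i + 1) (c + 1).
have -> : c = (i + c) - i by lia.
case: Hn => Z.
  have E : i + 1 - n = (i - n) + 1 by lia.
  have E2 : c + 1 + n = (c + n) + 1 by lia.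
  rewrite E E2 in Z; move/receptor_Rz: Z.
  have -> : c + n = (i + c) - (i - n) by lia.
  by move/(Rz_const (i + c) (i - n) i).
have E : i + 1 - n - 1 = (i - n - 1) + 1 by lia.
have E2 : c + 1 + n = (c + n) + 1 by lia.
rewrite E E2 in Z; move/donor_Dz: Z; rewrite (link_v colsE).
have -> : c + n = (i + c) - (i - n - 1 + 1) by lia.
by move/(Rz_const (i + c) (i - n - 1 + 1) i).
Qed.

Lemma all_Dz i c : Dz D i c.
Proof. by rewrite (link_v colsE); exact: all_Rz. Qed.

End Chain.

Section Core.
Variable B : AbCat.
Variables (R0 R1 R2 R3 R4 : Obj B).
Variables (H0 V0 : HH B R0 R1) (H1 V1 : HH B R1 R2) (H2 V2 : HH B R2 R3) (H3 V3 : HH B R3 R4).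
Hypotheses (hHH1 : cmp H2 H1 = 0) (hHH2 : cmp H3 H2 = 0)
  (hVV0 : cmp V1 V0 = 0) (hVV1 : cmp V2 V1 = 0)
  (hHV0 : cmp H1 V0 = cmp V1 H0) (hHV1 : cmp H2 V1 = cmp V2 H1) (hHV2 : cmp H3 V2 = cmp V3 H2).
Hypothesis Hexact : forall t (x : HH B t R2), cmp H2 x = 0 -> inIm H1 x.
Hypothesis Hrec : forall t (u : HH B t R3), cmp H3 u = 0 -> cmp V3 u = 0 -> inIm (cmp H2 V1) u.
Hypothesis Hdon : forall t (z : HH B t R1), cmp (cmp H2 V1) z = 0 ->
  exists t' (e : HH B t' t) (a : HH B t' R0) (b : HH B t' R0),
    epi e /\ cmp z e = cmp H0 a + cmp V0 b.

Lemma core t (x : HH B t R2) : cmp (H2 + V2) x = 0 -> inIm (H1 - V1) x.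
Proof.
move=> Hx.
have HVx : cmp V2 x = - cmp H2 x.
  by apply/eqP; rewrite -addr_eq0 addrC -compDl Hx.
have h3 : cmp H3 (cmp H2 x) = 0 by rewrite Defs.compA hHH2 comp0m.
have v3 : cmp V3 (cmp H2 x) = 0.
  by rewrite Defs.compA -hHV2 -Defs.compA HVx compmN h3 oppr0.
have [t1 [e1 [z [He1 Hz]]]] := Hrec h3 v3.
have h2 : cmp H2 (cmp x e1 - cmp V1 z) = 0.
  by rewrite compBr !Defs.compA Hz subrr.
have [t2 [e2 [w [He2 Hw]]]] := Hexact h2.
have EX : cmp (cmp x e1) e2 = cmp V1 (cmp z e2) + cmp H1 w.
  by rewrite Hw compBl !Defs.compA addrC subrK.
have Hd : cmp (cmp H2 V1) (cmp z e2 + w) = 0.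
  have : cmp (H2 + V2) (cmp (cmp x e1) e2) = 0 by rewrite !Defs.compA Hx !comp0m.
  rewrite EX compDl !compDr !Defs.compA hHH1 comp0m addr0 hVV1 !comp0m add0r -hHV1.
  by [].
have [t3 [e3 [a [b [He3 Hab]]]]] := Hdon Hd.
exists t3, (cmp e1 (cmp e2 e3)), (cmp V0 a + cmp w e3); split.
  by apply: epi_comp => //; apply: epi_comp.
have Z3 : cmp z (cmp e2 e3) = cmp H0 a + cmp V0 b - cmp w e3.
  by rewrite Defs.compA -Hab compDl addrK.
have L : cmp (H1 - V1) (cmp V0 a + cmp w e3) =
   cmp (cmp V1 H0) a + cmp (cmp H1 w) e3 - cmp (cmp V1 w) e3.
  by rewrite compBl !compDr !Defs.compA hHV0 hVV0 comp0m add0r.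
have R : cmp x (cmp e1 (cmp e2 e3)) =
   cmp (cmp V1 H0) a + cmp (cmp H1 w) e3 - cmp (cmp V1 w) e3.
  rewrite (Defs.compA x) (Defs.compA (cmp x e1)) EX compDl -(Defs.compA V1) -(Defs.compA z) Z3.
  rewrite !compBr !compDr !Defs.compA hVV0 comp0m addr0.
  by rewrite addrAC.
by rewrite L R.
Qed.

End Core.

Lemma core_zero (B : AbCat) (R0 R1 R2 : Obj B) (H1 V1 : HH B R0 R1) (H2 V2 : HH B R1 R2) :
  cmp H2 H1 = 0 -> cmp V2 V1 = 0 -> cmp H2 V1 = cmp V2 H1 ->
  cmp (H2 + V2) (H1 - V1) = 0.
Proof.
move=> a b c; rewrite compDl !compBr a b c sub0r subr0.
by rewrite addrC subrr.
Qed.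

Section Casts.
Variables (A : AbCat) (D : DoubleComplex A).

Lemma castF_irr (F : int -> Obj A) x y (e e' : x = y) : castF F e = castF F e'.
Proof. by rewrite (eq_irrelevance e e'). Qed.
Lemma castF_comp (F : int -> Obj A) x y z (e : x = y) (e' : y = z) :
  cmp (castF F e') (castF F e) = castF F (etrans e e').
Proof. by case: z / e'; case: y / e; rewrite comp1m. Qed.
Lemma cast_d2 a b b' (e : b = b') (e2 : b + 1 = b' + 1) :
  cmp (d2 D a b') (castF (DC D a) e) = cmp (castF (DC D a) e2) (d2 D a b).
Proof. by case: b' / e e2 => e2; rewrite !castF_refl comp1m compm1. Qed.
Lemma cast_d1 a b b' (e : b = b') :
  cmp (d1 D a b') (castF (DC D a) e) = cmp (castF (DC D (a+1)) e) (d1 D a b).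
Proof. by case: b' / e; rewrite comp1m compm1. Qed.
End Casts.

Section SMlemmas.
Variables (A B : AbCat) (S : ExactSumFunctor A B).

Lemma SM_ext X Y (f g : famHom X Y) : (forall i, f i = g i) -> SM S f = SM S g.
Proof. by move=> H; have -> : f = g by apply: functional_extensionality_dep. Qed.

Lemma SM0 X Y : SM S (fun i => (0 : HH A (X i) (Y i))) = 0.
Proof.
apply: (addrI (SM S (fun i => (0 : HH A (X i) (Y i))))).
by rewrite -SM_add addr0; apply: SM_ext => i; rewrite addr0.
Qed.

Lemma thetaInv_nat X Y (f : famHom X Y) :
  cmp (SM S f) (thetaInv S X) = cmp (thetaInv S Y) (SM S (shiftM f)).
Proof.
rewrite -[LHS]comp1m -(theta_inv_l S Y) -!Defs.compA; congr (cmp _ _).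
rewrite !Defs.compA -theta_nat -[RHS]compm1 -(theta_inv_r S X).
by rewrite !Defs.compA.
Qed.

Lemma thetaInv_mono X t (x : HH B t (SO S (shiftF X))) : cmp (thetaInv S X) x = 0 -> x = 0.
Proof. by move=> H; rewrite -(comp1m x) -(theta_inv_r S X) -Defs.compA H compm0. Qed.

Lemma theta_mono X t (x : HH B t (SO S X)) : cmp (theta S X) x = 0 -> x = 0.
Proof. by move=> H; rewrite -(comp1m x) -(theta_inv_l S X) -Defs.compA H compm0. Qed.

End SMlemmas.

Section PW.
Variables (A : AbCat) (D : DoubleComplex A).

Lemma d2d2_cast a b b' (e : b + 1 = b') b'' (e' : b' + 1 = b'') :
  cmp (cmp (castF (DC D a) e') (d2 D a b')) (cmp (castF (DC D a) e) (d2 D a b)) = 0.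
Proof. case: b' / e e' => e'; by rewrite castF_refl comp1m -Defs.compA d2d2 compm0. Qed.

Lemma d1d1_cast a b b' (e : b = b') b'' (e2 : b' = b'') :
  cmp (cmp (castF (DC D (a+1+1)) e2) (d1 D (a+1) b')) (cmp (castF (DC D (a+1)) e) (d1 D a b)) = 0.
Proof. case: b' / e e2 => e2; by rewrite castF_refl comp1m -Defs.compA d1d1 compm0. Qed.

Lemma d12_cast a b b1 (e2 : b = b1) B' (e1 : b1 + 1 = B') b3 (e4 : b + 1 = b3) (e3 : b3 = B') :
  cmp (cmp (castF (DC D (a+1)) e1) (d2 D (a+1) b1)) (cmp (castF (DC D (a+1)) e2) (d1 D a b)) =
  cmp (cmp (castF (DC D (a+1)) e3) (d1 D a b3)) (cmp (castF (DC D a) e4) (d2 D a b)).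
Proof.
case: b1 / e2 e1 => e1; case: b3 / e4 e3 => e3.
rewrite !castF_refl !comp1m -!Defs.compA -d1d2; congr (cmp _ _).
exact: castF_irr.
Qed.

Lemma row_cast (rowsE : rowsExact D) a b b' (e : b + 1 = b') b'' (e' : b' + 1 = b'') :
  exactAt (cmp (castF (DC D a) e) (d2 D a b)) (cmp (castF (DC D a) e') (d2 D a b')).
Proof.
case: b' / e e' => e'; rewrite castF_refl comp1m.
apply/exact_elem; split; first by rewrite -Defs.compA d2d2 compm0.
move=> t x; rewrite -Defs.compA => /(mono0 (@castFmono _ _ _ _ e')) hx.
by have /exact_elem [_ H] := rowsE a b; apply: H.
Qed.

Lemma G_rec a c B' (E : c + 1 = B') b2 (E2 : B' + 1 = b2) b3 (E3 : B' = b3) :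
  Rz D a c ->
  exactAt (cmp (cmp (castF (DC D (a+1)) E) (d1 D a (c+1))) (cmp (castF (DC D a) (erefl (c+1))) (d2 D a c)))
    (pairM (cmp (castF (DC D (a+1)) E2) (d2 D (a+1) B'))
           (cmp (castF (DC D (a+1+1)) E3) (d1 D (a+1) B'))).
Proof.
case: B' / E E2 E3 => E2 E3; case: b2 / E2; case: b3 / E3.
rewrite /= !comp1m => HR.
apply/exact_pairM; split.
  by rewrite !Defs.compA -d1d2 -Defs.compA d2d2 compm0.
split; first by rewrite Defs.compA d1d1 comp0m.
move=> t x h2 h1; exact: HR.
Qed.

Lemma G_don a c b c1 (E2 : c1 = b) (E1 : c + 1 = b) b4 (E3 : b = b4) b5 (E4 : b4 + 1 = b5) :
  Dz D a c ->
  exactAt (copairM (cmp (castF (DC D (a+1)) E2) (d1 D a c1)) (cmp (castF (DC D (a+1)) E1) (d2 D (a+1) c)))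
    (cmp (cmp (castF (DC D (a+1+1)) E4) (d2 D (a+1+1) b4)) (cmp (castF (DC D (a+1+1)) E3) (d1 D (a+1) b))).
Proof.
case: b / E2 E1 E3 => E1 E3; case: c1 / E1 E3 => E3; case: b4 / E3 E4 => E4; case: b5 / E4.
rewrite /= !comp1m => HD.
apply/exact_elem; split.
  rewrite /copairM compDr !Defs.compA.
  rewrite -(Defs.compA (d2 D (a+1+1) (c+1))) d1d1 compm0 comp0m add0r.
  by rewrite -(Defs.compA (d2 D (a+1+1) (c+1))) d1d2 Defs.compA d2d2 !comp0m.
move=> t x hx; exact: HD.
Qed.

End PW.

Section Main.
Variables (A B : AbCat) (S : ExactSumFunctor A B) (D : DoubleComplex A).
Hypotheses (rowsE : rowsExact D) (colsE : colsExact D) (wb : weaklyBounded D).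

Definition hF m : famHom (totFam D m) (totFam D (m+1)) :=
  fun i => cmp (castF (DC D i) (tot_idx2 m i)) (d2 D i (m - i)).
Definition vF m : famHom (totFam D m) (shiftF (totFam D (m+1))) :=
  fun i => cmp (castF (DC D (i+1)) (tot_idx1 m i)) (d1 D i (m - i)).
Lemma totD2E m : totD2 D S m = SM S (hF m). Proof. by []. Qed.
Lemma totD1E m : totD1 D S m = cmp (thetaInv S (totFam D (m+1))) (SM S (vF m)).
Proof. by []. Qed.

Lemma HHz m : cmp (totD2 D S (m+1)) (totD2 D S m) = 0.
Proof.
rewrite !totD2E -SM_comp -(SM0 S); apply: SM_ext => i.
exact: d2d2_cast.
Qed.

Lemma VVz m : cmp (totD1 D S (m+1)) (totD1 D S m) = 0.
Proof.
rewrite !totD1E -Defs.compA (Defs.compA (SM S (vF (m+1)))) thetaInv_nat.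
rewrite -Defs.compA -SM_comp (_ : SM S _ = 0) ?compm0 //.
rewrite -(SM0 S); apply: SM_ext => i.
exact: d1d1_cast.
Qed.

Lemma HVc m : cmp (totD2 D S (m+1)) (totD1 D S m) = cmp (totD1 D S (m+1)) (totD2 D S m).
Proof.
rewrite totD2E !totD1E totD2E Defs.compA thetaInv_nat -!Defs.compA -!SM_comp.
congr (cmp _ _); apply: SM_ext => i.
exact: d12_cast.
Qed.

Lemma Hex m t (x : HH B t (totO D S (m+1))) :
  cmp (totD2 D S (m+1)) x = 0 -> inIm (totD2 D S m) x.
Proof.
have : exactAt (totD2 D S m) (totD2 D S (m+1)).
  apply: SM_exact => i; exact: row_cast.
by move/exact_elem => [_ H]; apply: H.
Qed.

Lemma SM_pair X Y Z (f : famHom X Y) (g : famHom X Z) :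
  SM S (fun i => pairM (f i) (g i)) =
  cmp (SM S (fun i => @bp_inl A (Y i) (Z i))) (SM S f) + cmp (SM S (fun i => @bp_inr A (Y i) (Z i))) (SM S g).
Proof. by rewrite -!SM_comp -SM_add; apply: SM_ext. Qed.

Lemma SM_copair X Y Z (f : famHom X Z) (g : famHom Y Z) :
  SM S (fun i => copairM (f i) (g i)) =
  cmp (SM S f) (SM S (fun i => @bp_pl A (X i) (Y i))) + cmp (SM S g) (SM S (fun i => @bp_pr A (X i) (Y i))).
Proof. by rewrite -!SM_comp -SM_add; apply: SM_ext. Qed.

Lemma eP (m i : int) : m - i + 1 = m + 1 + 1 - (i + 1).
Proof. lia. Qed.

Definition Pn m : famHom (totFam D m) (shiftF (totFam D (m+1+1))) :=
  fun i => cmp (cmp (castF (DC D (i+1)) (eP m i)) (d1 D i (m - i + 1)))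
               (cmp (castF (DC D i) (erefl (m - i + 1))) (d2 D i (m - i))).

Lemma HV_Pn m : cmp (totD2 D S (m+1)) (totD1 D S m) =
  cmp (thetaInv S (totFam D (m+1+1))) (SM S (Pn m)).
Proof.
rewrite totD2E totD1E Defs.compA thetaInv_nat -Defs.compA -SM_comp.
congr (cmp _ _); apply: SM_ext => i; exact: d12_cast.
Qed.

Lemma Hrec m t (u : HH B t (totO D S (m+1+1))) :
  cmp (totD2 D S (m+1+1)) u = 0 -> cmp (totD1 D S (m+1+1)) u = 0 ->
  inIm (cmp (totD2 D S (m+1)) (totD1 D S m)) u.
Proof.
move=> h2 h1.
have h1' : cmp (SM S (vF (m+1+1))) u = 0.
  by apply: thetaInv_mono; rewrite Defs.compA -totD1E.
set w := cmp (theta S (totFam D (m+1+1))) u.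
have w2 : cmp (SM S (shiftM (hF (m+1+1)))) w = 0.
  by rewrite /w Defs.compA theta_nat -Defs.compA -totD2E h2 compm0.
have w1 : cmp (SM S (shiftM (vF (m+1+1)))) w = 0.
  by rewrite /w Defs.compA theta_nat -Defs.compA h1' compm0.
have Ex : exactAt (SM S (Pn m))
   (SM S (fun i => pairM (shiftM (hF (m+1+1)) i) (shiftM (vF (m+1+1)) i))).
  apply: SM_exact => i; apply: G_rec; exact: (all_Rz rowsE colsE wb).
have /exact_elem [_ H] := Ex.
have [|t' [e [y [He Hy]]]] := H _ w.
  by rewrite SM_pair compDl -!Defs.compA w2 w1 !compm0 addr0.
exists t', e, y; split => //.
rewrite HV_Pn -Defs.compA Hy Defs.compA /w Defs.compA theta_inv_l comp1m.
by [].
Qed.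

Definition Gf m : famHom (totFam D (m+1)) (shiftF (totFam D (m+1+1+1))) :=
  fun i => cmp (hF (m+1+1) (i+1)) (vF (m+1) i).

Lemma Hdon m t (z : HH B t (totO D S (m+1))) :
  cmp (cmp (totD2 D S (m+1+1)) (totD1 D S (m+1))) z = 0 ->
  exists t' (e : HH B t' t) (a : HH B t' (totO D S m)) (b : HH B t' (totO D S m)),
    epi e /\ cmp z e = cmp (totD2 D S m) a + cmp (totD1 D S m) b.
Proof.
move=> hz.
have EG : cmp (totD2 D S (m+1+1)) (totD1 D S (m+1)) =
          cmp (thetaInv S (totFam D (m+1+1+1))) (SM S (Gf m)).
  by rewrite totD2E totD1E Defs.compA thetaInv_nat -Defs.compA -SM_comp.
have hz' : cmp (SM S (Gf m)) z = 0.
  by apply: thetaInv_mono; rewrite Defs.compA -EG.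
set w := cmp (theta S (totFam D (m+1))) z.
have w0 : cmp (SM S (shiftM (Gf m))) w = 0.
  by rewrite /w Defs.compA theta_nat -Defs.compA hz' compm0.
have Ex : exactAt (SM S (fun i => copairM (vF m i) (shiftM (hF m) i))) (SM S (shiftM (Gf m))).
  apply: SM_exact => i; apply: G_don; exact: (all_Dz rowsE colsE wb).
have /exact_elem [_ H] := Ex.
have [t' [e [y [He Hy]]]] := H _ w w0.
exists t', e, (cmp (thetaInv S (totFam D m)) (cmp (SM S (fun i => @bp_pr A (totFam D m i) (shiftF (totFam D m) i))) y)),
  (cmp (SM S (fun i => @bp_pl A (totFam D m i) (shiftF (totFam D m) i))) y); split => //.
rewrite totD2E totD1E !Defs.compA thetaInv_nat -!Defs.compA -compDr.
rewrite (addrC (cmp (SM S (shiftM (hF m))) _)) !Defs.compA -compDl -SM_copair Hy /w !Defs.compA theta_inv_l comp1m.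
by [].
Qed.

End Main.

Lemma odd_abs_succ (k : int) : odd (absz (k + 1)) = ~~ odd (absz k).
Proof.
case: k => n.
  have -> : Posz n + 1 = Posz n.+1 by lia.
  by [].
have -> : Negz n + 1 = - Posz n by rewrite NegzE; lia.
by rewrite abszN /= negbK.
Qed.

Section Final.
Variables (A B : AbCat) (S : ExactSumFunctor A B) (D : DoubleComplex A).
Hypotheses (rowsE : rowsExact D) (colsE : colsExact D) (wb : weaklyBounded D).

Section Sign.
Variable s : bool.
Definition Vs j := if s then - totD1 D S j else totD1 D S j.

Lemma VsVs m : cmp (Vs (m+1)) (Vs m) = 0.
Proof. by rewrite /Vs; case: s; rewrite ?compNm ?compmN ?opprK VVz. Qed.
Lemma HVs m : cmp (totD2 D S (m+1)) (Vs m) = cmp (Vs (m+1)) (totD2 D S m).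
Proof. by rewrite /Vs; case: s; rewrite ?compNm ?compmN HVc. Qed.

Lemma Hrec_s m t (u : HH B t (totO D S (m+1+1))) :
  cmp (totD2 D S (m+1+1)) u = 0 -> cmp (Vs (m+1+1)) u = 0 ->
  inIm (cmp (totD2 D S (m+1)) (Vs m)) u.
Proof.
rewrite /Vs; case: s => /= h2 h1.
  have h1' : cmp (totD1 D S (m+1+1)) u = 0.
    by apply/eqP; rewrite -oppr_eq0 -compNm h1.
  have [t' [e [y [He Hy]]]] := Hrec rowsE colsE wb h2 h1'.
  exists t', e, (- y); split => //.
  by rewrite compmN compmN compNm opprK.
exact: (Hrec rowsE colsE wb h2 h1).
Qed.

Lemma Hdon_s m t (z : HH B t (totO D S (m+1))) :
  cmp (cmp (totD2 D S (m+1+1)) (Vs (m+1))) z = 0 ->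
  exists t' (e : HH B t' t) (a : HH B t' (totO D S m)) (b : HH B t' (totO D S m)),
    epi e /\ cmp z e = cmp (totD2 D S m) a + cmp (Vs m) b.
Proof.
rewrite /Vs; case: s => /= hz.
  have hz' : cmp (cmp (totD2 D S (m+1+1)) (totD1 D S (m+1))) z = 0.
    by apply/eqP; rewrite -oppr_eq0 -compNm -compmN hz.
  have [t' [e [a [b [He Hy]]]]] := Hdon rowsE colsE wb hz'.
  exists t', e, a, (- b); split => //.
  by rewrite compmN compNm opprK.
exact: (Hdon rowsE colsE wb hz).
Qed.

Lemma core_s k t (x : HH B t (totO D S (k+1+1))) :
  cmp (totD2 D S (k+1+1) + Vs (k+1+1)) x = 0 -> inIm (totD2 D S (k+1) - Vs (k+1)) x.
Proof.
apply: core.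
- exact: HHz.
- exact: HHz.
- exact: VsVs.
- exact: VsVs.
- exact: HVs.
- exact: HVs.
- exact: HVs.
- move=> t0 x0; exact: Hex.
- move=> t0 u; exact: Hrec_s.
- move=> t0 z; exact: Hdon_s.
Qed.

Lemma zero_s k : cmp (totD2 D S (k+1+1) + Vs (k+1+1)) (totD2 D S (k+1) - Vs (k+1)) = 0.
Proof. apply: core_zero; [exact: HHz | exact: VsVs | exact: HVs]. Qed.

End Sign.

Lemma core_tot k : isZeroObj (cokO (kerLift (totD D S (k+1+1)) (totD D S (k+1)))).
Proof.
have E2 : totD D S (k+1+1) = totD2 D S (k+1+1) + Vs (odd (absz (k+1+1))) (k+1+1) by [].
have E1 : totD D S (k+1) = totD2 D S (k+1) - Vs (odd (absz (k+1+1))) (k+1).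
  rewrite /totD /Vs (odd_abs_succ (k+1)).
  by case: (odd (absz (k+1))) => /=; rewrite ?opprK.
rewrite E1 E2; apply: ker_cok_zero; first exact: zero_s.
apply/exact_elem; split; first exact: zero_s.
move=> t x; exact: core_s.
Qed.

Lemma gen_tot m n (e : m + 1 = n) :
  isZeroObj (cokO (kerLift (totD D S n) (cmp (castF (totO D S) e) (totD D S m)))).
Proof.
case: n / e; rewrite castF_refl comp1m.
have -> : m = m - 1 + 1 by rewrite subrK.
exact: core_tot.
Qed.

End Final.

Theorem corollary6p3 (A B : AbCat) (S : ExactSumFunctor A B) (D : DoubleComplex A) :
  rowsExact D -> colsExact D -> weaklyBounded D ->
  forall n : int, isZeroObj (Htot D S n).
Proof. move=> rE cE wb n; exact: (gen_tot S rE cE wb (sub1K n)). Qed.
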